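(* Let $p$ be a prime and let $(\mathcal G,\mathbf x)$ and $(\mathcal H,\mathbf y)$ be similar finite $p$-rigid multi-sorted relational structures, each with $r$ distinguished vertices. Then $(\mathcal G,\mathbf x)\cong(\mathcal H,\mathbf y)$ if and only if $$\mathrm{hom}((\mathcal K,\mathbf z),(\mathcal G,\mathbf x))\equiv\mathrm{hom}((\mathcal K,\mathbf z),(\mathcal H,\mathbf y))\pmod p$$ for every similar finite multi-sorted structure $(\mathcal K,\mathbf z)$ with $r$ distinguished vertices.
   Context: A multi-sorted structure with $r$ distinguished vertices $(\mathcal G,\mathbf x)$ is a multi-sorted structure $\mathcal G$ (pairwise disjoint sorts $G_1,\dots,G_k$, relations of fixed types) together with an $r$-tuple $\mathbf x=(x_1,\dots,x_r)$ of elements (possibly of different sorts, with a fixed sort pattern common to similar structures). Homomorphisms $(\mathcal K,\mathbf z)\to(\mathcal G,\mathbf x)$ are homomorphisms $\varphi=\{\varphi_i\}$ of multi-sorted structures (sort-preserving maps preserving all relations) with $\varphi(z_j)=x_j$ for all $j$; $\mathrm{hom}$ counts them; isomorphisms and automorphisms are defined accordingly. $(\mathcal G,\mathbf x)$ is $p$-rigid if it has no automorphism $\pi=\{\pi_i\}$ of order $p$ (each $\pi_i$ identity or of order $p$, not all identity) fixing all distinguished vertices. *)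

(* Defs.v *)
From mathcomp Require Import all_boot.
Set Implicit Arguments. Unset Strict Implicit. Unset Printing Implicit Defensive.

(* A signature (similarity type) of multi-sorted relational structures with
   distinguished vertices: [nsorts] sorts, [nrels] relation symbols, relation
   symbol [i] has type [rtype i] (a list of sorts), and the distinguished
   vertices have the sort pattern [dsorts] (so r = size dsorts). *)
Record signature := Signature {
  nsorts : nat;
  nrels : nat;
  rtype : 'I_nrels -> seq 'I_nsorts;
  dsorts : seq 'I_nsorts
}.

(* A finite multi-sorted structure with distinguished vertices.  The pairwise
   disjoint sorts G_1,...,G_k are represented as the fibres of [srt] on a
   single finite carrier (their disjoint union). *)
Unset Implicit Arguments.
Record mstruct (S : signature) := MStruct {
  carrier : finType;
  srt : carrier -> 'I_(nsorts S);
  rel : forall i : 'I_(nrels S), pred ((size (@rtype S i)).-tuple carrier);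
  rel_typed : forall (i : 'I_(nrels S)) (t : (size (@rtype S i)).-tuple carrier), rel i t -> map srt t = @rtype S i;
  dist : (size (@dsorts S)).-tuple carrier;
  dist_typed : map srt dist = @dsorts S
}.

Set Implicit Arguments.
Arguments carrier {S} _.
Arguments srt {S} _ _.
Arguments rel {S} _ _ _.
Arguments dist {S} _.

Definition is_hom (S : signature) (K G : mstruct S) (f : carrier K -> carrier G) : bool :=
  [&& [forall v, srt G (f v) == srt K v],
      [forall i, forall t, rel K i t ==> rel G i (map_tuple f t)] &
      map f (dist K) == dist G].

Arguments is_hom {S} K G f.

Definition hom (S : signature) (K G : mstruct S) : nat :=
  #|[pred f : {ffun carrier K -> carrier G} | is_hom K G f]|.

Definition isomorphic (S : signature) (G H : mstruct S) : Prop :=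
  exists (f : carrier G -> carrier H) (g : carrier H -> carrier G),
    [/\ cancel f g, cancel g f, is_hom G H f & is_hom H G g].

Definition order_on_sort (S : signature) (G : mstruct S)
    (pi : carrier G -> carrier G) (s : 'I_(nsorts S)) (p : nat) : Prop :=
  (forall v, srt G v = s -> iter p pi v = v) /\
  (forall n, 0 < n < p -> exists v, srt G v = s /\ iter n pi v <> v).

Arguments order_on_sort {S} G pi s p.

(* automorphism of order p (fixing all distinguished vertices, which is part
   of being a homomorphism of structures with distinguished vertices) *)
Definition aut_of_order (p : nat) (S : signature) (G : mstruct S)
    (pi : carrier G -> carrier G) : Prop :=
  (exists pinv : carrier G -> carrier G,
     [/\ cancel pi pinv, cancel pinv pi, is_hom G G pi & is_hom G G pinv]) /\
  (forall s : 'I_(nsorts S),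
     (forall v, srt G v = s -> pi v = v) \/ order_on_sort G pi s p) /\
  (exists v, pi v <> v).

Arguments aut_of_order p {S} G pi.

Definition p_rigid (p : nat) (S : signature) (G : mstruct S) : Prop :=
  ~ exists pi, aut_of_order p G pi.

(* Main.v *)
From HB Require Import structures.
Require Import Defs.
From mathcomp Require Import all_boot all_fingroup all_solvable.
From Stdlib Require Import FunctionalExtensionality.
Set Implicit Arguments. Unset Strict Implicit. Unset Printing Implicit Defensive.

Section Main.
Variable S : signature.

Definition inj (K G : mstruct S) :=
  #|[pred f : {ffun carrier K -> carrier G} | is_hom K G f && injectiveb f]|.

Lemma is_hom_ext (K G : mstruct S) (f g : carrier K -> carrier G) :
  f =1 g -> is_hom K G f = is_hom K G g.
Proof. by move=> /functional_extensionality ->. Qed.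

Lemma is_homP (K G : mstruct S) (f : carrier K -> carrier G) :
  is_hom K G f <->
  [/\ forall v, srt G (f v) = srt K v,
      forall i t, Defs.rel K i t -> Defs.rel G i (map_tuple f t)
    & map f (dist K) = dist G].
Proof.
split => [/and3P [/forallP Hs /forallP Hr /eqP Hd] | [Hs Hr Hd]].
  split => //; first by move=> v; exact/eqP.
  by move=> i t Ht; move: (Hr i) => /forallP /(_ t) /implyP; apply.
apply/and3P; split.
- by apply/forallP=> v; apply/eqP/Hs.
- by apply/forallP=> i; apply/forallP=> t; apply/implyP; exact: Hr.
- exact/eqP.
Qed.

Lemma map_tuple_comp (T1 T2 T3 : Type) n (f : T1 -> T2) (g : T2 -> T3)
  (t : n.-tuple T1) : map_tuple (g \o f) t = map_tuple g (map_tuple f t).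
Proof. by apply: val_inj; rewrite /= map_comp. Qed.

Lemma is_hom_comp (K G L : mstruct S) f g :
  is_hom K G f -> is_hom G L g -> is_hom K L (g \o f).
Proof.
move=> /is_homP [Hs Hr Hd] /is_homP [Hs' Hr' Hd']; apply/is_homP; split.
- by move=> v /=; rewrite Hs' Hs.
- by move=> i t Ht; rewrite map_tuple_comp; apply: Hr'; exact: Hr.
- by rewrite map_comp Hd Hd'.
Qed.

Lemma card_bij_pred (T1 T2 : finType) (A : {pred T1}) (B : {pred T2})
  (phi : T1 -> T2) (psi : T2 -> T1) :
  (forall x, x \in A -> phi x \in B) -> (forall y, y \in B -> psi y \in A) ->
  (forall x, x \in A -> psi (phi x) = x) -> (forall y, y \in B -> phi (psi y) = y) ->
  #|A| = #|B|.
Proof.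
move=> HA HB K1 K2.
rewrite -(@card_in_imset _ _ phi A); last first.
  by move=> x y Hx Hy E; rewrite -(K1 x Hx) -(K1 y Hy) E.
apply: eq_card => y; apply/imsetP/idP => [[x Hx ->]|Hy]; first exact: HA.
by exists (psi y); [exact: HB | rewrite K2].
Qed.

Lemma iso_hom (K G H : mstruct S) : isomorphic G H -> hom K G = hom K H.
Proof.
case=> f [g [fK gK Hf Hg]]; rewrite /hom.
apply: (@card_bij_pred _ _ _ _
   (fun h : {ffun carrier K -> carrier G} => [ffun v => f (h v)])
   (fun h : {ffun carrier K -> carrier H} => [ffun v => g (h v)])) => /=.
- move=> h; rewrite !inE => Hh; rewrite (is_hom_ext (g := f \o h)); first exact: is_hom_comp.
  by move=> v; rewrite ffunE.
- move=> h; rewrite !inE => Hh; rewrite (is_hom_ext (g := g \o h)); first exact: is_hom_comp.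
  by move=> v; rewrite ffunE.
- by move=> h _; apply/ffunP => v; rewrite !ffunE fK.
- by move=> h _; apply/ffunP => v; rewrite !ffunE gK.
Qed.

Section Quot.
Unset Implicit Arguments.
Variables (K : mstruct S) (e : {ffun carrier K -> {set carrier K}}).

Definition qfun (v : carrier K) := (e v, srt K v).
Definition qT := {x : {set carrier K} * 'I_(nsorts S) | [exists v, qfun v == x]}.
Lemma qP v : [exists u, qfun u == qfun v]. Proof. by apply/existsP; exists v. Qed.
Definition qmap v : qT := exist _ (qfun v) (qP v).
Definition qsrt (x : qT) := (val x).2.
Definition qrel i : pred ((size (@rtype S i)).-tuple qT) :=
  fun T => [exists t, Defs.rel K i t && (map_tuple qmap t == T)].
Lemma qrel_typed i T : qrel i T -> map qsrt T = @rtype S i.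
Proof.
move=> /existsP [t /andP [Ht /eqP <-]]; rewrite /= -map_comp.
exact: (rel_typed _ _ _ _ Ht).
Qed.
Definition qdist := map_tuple qmap (dist K).
Lemma qdist_typed : map qsrt qdist = @dsorts S.
Proof. rewrite /= -map_comp; exact: (dist_typed _ K). Qed.
Definition qK : mstruct S := @MStruct S qT qsrt qrel qrel_typed qdist qdist_typed.

Definition pickv (x : qT) : carrier K := xchoose (elimT existsP (valP x)).
Lemma qmap_pick x : qmap (pickv x) = x.
Proof. apply: val_inj => /=; exact/eqP/(xchooseP (elimT existsP (valP x))). Qed.

Definition equivb := [forall v, v \in e v] &&
  [forall u, forall v, (u \in e v) ==> (e u == e v) && (srt K u == srt K v)].

Lemma qmap_eq : equivb -> forall u v, (qmap u == qmap v) = (u \in e v).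
Proof.
move=> /andP [/forallP Hr /forallP Ht] u v.
rewrite -val_eqE /= /qfun xpair_eqE.
apply/idP/idP => [/andP [/eqP <- _]|Huv]; first exact: Hr.
by move: (Ht u) => /forallP /(_ v) /implyP /(_ Huv).
Qed.

Lemma qmap_hom : is_hom K qK qmap.
Proof.
apply/is_homP; split => //.
by move=> i t Ht; apply/existsP; exists t; rewrite Ht eqxx.
Qed.

End Quot.
Arguments equivb {K} e. Arguments qK {K} e. Arguments qmap {K} e v.
Arguments pickv {K e} x. Arguments qmap_pick {K e} x. Arguments qmap_eq {K e} _ u v.
Arguments qmap_hom {K} e.

Definition kerf (K G : mstruct S) (f : carrier K -> carrier G) :
  {ffun carrier K -> {set carrier K}} := [ffun v => [set u | f u == f v]].
Definition cnt (K G : mstruct S) e :=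
  #|[pred f : {ffun carrier K -> carrier G} | is_hom K G f && (@kerf K G f == e)]|.
Definition e0 (K : mstruct S) : {ffun carrier K -> {set carrier K}} :=
  [ffun v => [set v]].

Lemma cnt_inj (K G : mstruct S) e : equivb e -> @cnt K G e = inj (qK e) G.
Proof.
move=> Heq; symmetry.
apply: (@card_bij_pred _ _ _ _
   (fun g : {ffun carrier (qK e) -> carrier G} => [ffun v => g (qmap e v)])
   (fun f => [ffun x => f (pickv x)])) => /=.
- move=> g /andP [Hg /injectiveP gi]; apply/andP; split.
    rewrite (is_hom_ext (g := g \o qmap e)); last by move=> v; rewrite ffunE.
    by apply: is_hom_comp Hg; exact: qmap_hom.
  apply/eqP; rewrite /kerf; apply/ffunP => v; rewrite !ffunE; apply/setP => u; rewrite inE !ffunE.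
  by rewrite (inj_eq gi) qmap_eq.
- move=> f /andP [Hf /eqP Hk].
  have Hfe : forall u v, (u \in e v) = (f u == f v).
    by move=> u v; rewrite -Hk ffunE inE.
  have key : forall v, f (pickv (qmap e v)) = f v.
    by move=> v; apply/eqP; rewrite -Hfe -qmap_eq // qmap_pick.
  case/is_homP: Hf => Hs Hr Hd.
  apply/andP; split.
    apply/is_homP; split.
    + by move=> x; rewrite ffunE Hs -{2}(qmap_pick x).
    + move=> i T /existsP [t /andP [Ht /eqP <-]].
      have -> : map_tuple [ffun x => f (pickv x)] (map_tuple (qmap e) t)
                = map_tuple f t.
        apply: val_inj => /=; rewrite -map_comp; apply: eq_map => v.
        by rewrite /= ffunE key.
      exact: Hr.
    + rewrite /= -map_comp -Hd; apply: eq_map => v; by rewrite /= ffunE key.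
  apply/injectiveP => x y; rewrite !ffunE => E.
  rewrite -(qmap_pick x) -(qmap_pick y); apply/eqP; rewrite qmap_eq // Hfe E.
  by [].
- by move=> g _; apply/ffunP => x; rewrite !ffunE qmap_pick.
- move=> f /andP [_ /eqP Hk]; apply/ffunP => v; rewrite !ffunE.
  apply/eqP; have : pickv (qmap e v) \in e v.
    by rewrite -qmap_eq ?qmap_pick // -Hk.
  by rewrite -Hk ffunE inE.
Qed.

Lemma qK_small (K : mstruct S) e : equivb e -> e != e0 K ->
  #|carrier (qK e)| < #|carrier K|.
Proof.
move=> Heq Hne.
have pinj : injective (@pickv K e) by apply: (can_inj (@qmap_pick K e)).
rewrite ltn_neqAle (leq_card _ pinj) andbT.
apply/negP => /eqP Hc.
have [g gK Kg] : bijective (@pickv K e) by apply: inj_card_bij => //; rewrite Hc.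
have qg : forall u, qmap e u = g u.
  by move=> u; rewrite -{1}(Kg u) qmap_pick.
have qinj : injective (qmap e).
  by move=> u v; rewrite !qg => /(congr1 (@pickv K e)); rewrite !Kg.
move/negP: Hne; apply; apply/eqP; rewrite /e0; apply/ffunP => v; rewrite ffunE.
apply/setP => u; rewrite inE; apply/idP/eqP => [Hu|->].
  by apply: qinj; apply/eqP; rewrite qmap_eq.
by case/andP: Heq => /forallP.
Qed.

Lemma kerf_equiv (K G : mstruct S) (f : carrier K -> carrier G) :
  is_hom K G f -> equivb (@kerf K G f).
Proof.
case/is_homP => Hs _ _; apply/andP; split.
  by apply/forallP => v; rewrite ffunE inE.
apply/forallP => u; apply/forallP => v; apply/implyP; rewrite ffunE inE => /eqP E.
apply/andP; split.
  by apply/eqP; rewrite !ffunE; apply/setP => z; rewrite !inE E.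
by rewrite -Hs E Hs.
Qed.

Lemma hom_decomp (K G : mstruct S) :
  hom K G = inj K G + \sum_(e | equivb e && (e != e0 K)) inj (qK e) G.
Proof.
have H1 : hom K G = \sum_(e | equivb e) @cnt K G e.
  rewrite /hom -sum1_card (partition_big (fun f : {ffun carrier K -> carrier G} => @kerf K G f) (@equivb K)); last first.
  by move=> f; rewrite inE; exact: kerf_equiv.
  apply: eq_bigr => e _; rewrite /cnt -sum1_card; apply: eq_bigl => f.
  by rewrite !inE.
have He0 : equivb (e0 K).
  apply/andP; split; first by apply/forallP => v; rewrite ffunE inE.
  apply/forallP => u; apply/forallP => v; apply/implyP.
  move=> Hu; have -> : u = v by move: Hu; rewrite ffunE inE => /eqP.
  by rewrite !eqxx.
rewrite H1 (bigD1 (e0 K)) //=; congr (_ + _).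
  apply: eq_card => f; rewrite !inE; congr (_ && _).
  apply/eqP/injectiveP => [E u v Huv|fi].
    have : u \in @kerf K G f v by rewrite ffunE inE Huv.
    by rewrite E ffunE inE => /eqP.
  apply/ffunP => v; rewrite !ffunE; apply/setP => u; rewrite !inE.
  by apply/eqP/eqP => [/fi|->].
by apply: eq_bigr => e /andP [He _]; exact: cnt_inj.
Qed.

Lemma inj_congr p (G H : mstruct S) :
  (forall K, hom K G = hom K H %[mod p]) -> forall K, inj K G = inj K H %[mod p].
Proof.
move=> Hh.
have step : forall K : mstruct S,
   (forall K' : mstruct S, #|carrier K'| < #|carrier K| -> inj K' G = inj K' H %[mod p])
   -> inj K G = inj K H %[mod p].
  move=> K IH; have E := Hh K; rewrite !hom_decomp in E.
  set s1 := \sum_(e | _) _ in E; set s2 := \sum_(e | _) _ in E.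
  have Es : s1 = s2 %[mod p].
    apply: (big_ind2 (fun a b => a = b %[mod p])) => //.
      by move=> x1 x2 y1 y2 E1 E2; rewrite -modnDm E1 E2 modnDm.
    by move=> e /andP [He Hne]; apply: IH; exact: qK_small.
  rewrite -modnDmr Es modnDmr in E.
  by apply/eqP; rewrite -(eqn_modDr s2); apply/eqP.
suff: forall n (K : mstruct S), #|carrier K| <= n -> inj K G = inj K H %[mod p].
  by move=> X K; exact: (X _ K (leqnn _)).
elim=> [|n IHn] K hK; apply: step => K' hK'.
  by move: (leq_trans hK' hK).
by apply: IHn; rewrite -ltnS; exact: leq_trans hK' hK.
Qed.

Lemma inj_iso (G H : mstruct S) (f : carrier G -> carrier H) (g : carrier H -> carrier G) :
  injective f -> injective g -> is_hom G H f -> is_hom H G g -> isomorphic G H.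
Proof.
move=> fi gi Hf Hg.
have [finv fK Kf] : bijective f by apply: inj_card_bij => //; exact: leq_card gi.
exists f, finv; split => //.
have tinj : forall (T1 T2 : finType) (h : T1 -> T2) n, injective h ->
    injective (@map_tuple n _ _ h).
  move=> T1 T2 h n hi t1 t2 /(congr1 val) /= E; apply: val_inj.
  exact: (inj_map hi E).
case/is_homP: Hf => Hs Hr Hd; case/is_homP: Hg => Hs' Hr' Hd'.
apply/is_homP; split.
- by move=> w; rewrite -{2}(Kf w) Hs.
- move=> i T HT.
  pose Rg := [set t | Defs.rel G i t]; pose Rh := [set t | Defs.rel H i t].
  have sub1 : [set map_tuple f t | t in Rg] \subset Rh.
    by apply/subsetP => _ /imsetP [t Ht ->]; rewrite inE; apply: Hr; rewrite inE in Ht.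
  have sub2 : [set map_tuple g t | t in Rh] \subset Rg.
    by apply/subsetP => _ /imsetP [t Ht ->]; rewrite inE; apply: Hr'; rewrite inE in Ht.
  have c2 : #|Rh| <= #|Rg|.
    rewrite -(card_imset _ (tinj _ _ g _ gi)); exact: subset_leq_card sub2.
  have Eq : [set map_tuple f t | t in Rg] = Rh.
    by apply/eqP; rewrite eqEcard sub1 card_imset //; exact: tinj.
  have : T \in Rh by rewrite inE.
  rewrite -Eq => /imsetP [t Ht ->].
  have -> : map_tuple finv (map_tuple f t) = t.
    by apply: val_inj; rewrite /= -map_comp (eq_map fK) map_id.
  by rewrite inE in Ht.
- by rewrite -Hd -map_comp (eq_map fK) map_id.
Qed.

Lemma rigid_inj p (G : mstruct S) : prime p -> p_rigid p G -> ~~ (p %| inj G G).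
Proof.
move=> pp Hr; apply/negP => Hd.
pose A := [set x : {perm carrier G} | is_hom G G x].
have gA : group_set A.
  apply/group_setP; split.
    rewrite inE (is_hom_ext (g := id)); last by move=> v; rewrite perm1.
    apply/is_homP; split => //; last by rewrite map_id.
    by move=> i t Ht; have -> : map_tuple id t = t by apply: val_inj; rewrite /= map_id.
  move=> x y; rewrite !inE => Hx Hy.
  rewrite (is_hom_ext (g := y \o x)); last by move=> v; rewrite permM.
  exact: is_hom_comp.
pose AG := Group gA.
have cardA : #|AG| = inj G G.
  rewrite /inj -(@card_in_imset _ _ (fun x : {perm carrier G} => [ffun v => x v]) A).
    apply: eq_card => f; apply/imsetP/idP.
      case=> x; rewrite inE => Hx ->; rewrite inE /=; apply/andP; split.
        by rewrite (is_hom_ext (g := x)) // => v; rewrite ffunE.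
      by apply/injectiveP => u v; rewrite !ffunE; apply: perm_inj.
    rewrite inE => /andP [Hf /injectiveP fi].
    exists (perm fi); first by rewrite inE (is_hom_ext (g := f)) // => v; rewrite permE.
    by apply/ffunP => v; rewrite ffunE permE.
  move=> x y _ _ E; apply/permP => v; move/ffunP: E => /(_ v); by rewrite !ffunE.
have HpA : p %| #|AG| by rewrite cardA.
have [x xA ox] := @Cauchy _ _ AG pp HpA.
have xAh : is_hom G G x by move: xA; rewrite inE.
apply: Hr; exists (fun v => x v); split.
  exists (fun v => (x^-1)%g v); split.
  - exact: permK.
  - exact: permKV.
  - exact: xAh.
  - by move: xA; rewrite -groupV inE.
split.
  move=> s; case: (boolP [forall v, (srt G v == s) ==> (x v == v)]) => Hs.
    by left => v Hv; apply/eqP; move: (forallP Hs v); rewrite Hv eqxx.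
  right; move/forallPn: Hs => [w]; rewrite negb_imply => /andP [/eqP Hw Hxw].
  split.
    by move=> v _; rewrite -permX -ox expg_order perm1.
  move=> n /andP [n0 np].
  have [v /andP [/eqP Hv Hn]|Hall] := pickP (fun v => (srt G v == s) && (iter n x v != v)).
    by exists v; split => //; exact/eqP.
  have Hfix : (x ^+ n)%g w = w.
    by rewrite permX; move: (Hall w); rewrite /= Hw eqxx /= => /negbFE/eqP.
  have cop : coprime #|<[x]>%G| n.
    by rewrite /= -orderE ox prime_coprime // gtnNdvd.
  have Ex := expgK cop (cycle_id x).
  have gen : forall (y : {perm carrier G}) m, y w = w -> (y ^+ m)%g w = w.
    move=> y m Hy; elim: m => [|m IHm]; first by rewrite expg0 perm1.
    by rewrite expgS permM Hy IHm.
  by move: Hxw; rewrite -{1}Ex /= gen ?eqxx.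
have [v Hv|Hall] := pickP (fun v => x v != v).
  by exists v; exact/eqP.
have x1 : x = 1%g.
  by apply/permP => v; rewrite perm1; move: (Hall v) => /= /negbFE/eqP.
by move: ox pp; rewrite x1 order1 => <-.
Qed.

End Main.

Theorem lemmaA3 (p : nat) (S : signature) (G H : mstruct S) :
  prime p -> p_rigid p G -> p_rigid p H ->
  (isomorphic G H <-> forall K : mstruct S, hom K G = hom K H %[mod p]).
Proof.
move=> pp rG rH; split.
  by move=> iso K; rewrite (@iso_hom S K G H iso).
move=> Hh; have Hc := @inj_congr S p G H Hh.
have nG := @rigid_inj S p G pp rG; have nH := @rigid_inj S p H pp rH.
have : 0 < inj G H.
  rewrite lt0n; apply/negP => /eqP E; move: nG; by rewrite /dvdn (Hc G) E mod0n.
case/card_gt0P => f; rewrite inE => /andP [Hf /injectiveP fi].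
have : 0 < inj H G.
  rewrite lt0n; apply/negP => /eqP E; move: nH; by rewrite /dvdn -(Hc H) E mod0n.
case/card_gt0P => g; rewrite inE => /andP [Hg /injectiveP gi].
exact: (@inj_iso S G H f g fi gi Hf Hg).
Qed.
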